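(* Let $k\in\mathbb{Z}^+$ with $k>1$ and $\pi\in S_k$ be fixed, and let $A_\pi$ be the $k\times k$ permutation matrix of $\pi$. There is a constant $C=C(\pi)$ such that for all integers $m,n\ge 0$, the number of $n\times n$ $0$-$1$ matrices containing at most $m$ copies of $A_\pi$ is at most \[\exp\left(C\left(n+\sqrt[2k-1]{m\,n^{2k-2}}\right)\right).\]
   Context: A copy of $A_\pi$ in an $n\times n$ $0$-$1$ matrix $M$ is a choice of row indices $x_1<\dots<x_k$ and column indices $y_1<\dots<y_k$ with $M_{x_i,y_{\pi(i)}}=1$ for all $i$. *)

(* Defs.v *)
From HB Require Import structures.
From mathcomp Require Import all_boot all_order all_algebra all_fingroup.
From mathcomp Require Import all_classical all_reals all_analysis.
Set Implicit Arguments. Unset Strict Implicit. Unset Printing Implicit Defensive.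

Definition incr_idx (k n : nat) (x : {ffun 'I_k -> 'I_n}) : bool :=
  [forall i : 'I_k, forall j : 'I_k, (i < j)%N ==> (x i < x j)%N].

Definition is_copy (k n : nat) (pi : 'S_k) (M : 'M[bool]_n)
    (xy : {ffun 'I_k -> 'I_n} * {ffun 'I_k -> 'I_n}) : bool :=
  [&& incr_idx xy.1, incr_idx xy.2 & [forall i : 'I_k, M (xy.1 i) (xy.2 (pi i))]].

Definition copies (k n : nat) (pi : 'S_k) (M : 'M[bool]_n) : nat :=
  #|[set xy | is_copy pi M xy]|.

(* Main.v *)
Require Import Defs.
From HB Require Import structures.
From mathcomp Require Import all_boot all_order all_algebra all_fingroup.
From mathcomp Require Import all_classical all_reals all_analysis.
From mathcomp Require Import zify lra.
From mathcomp Require Import ssrbool eqtype ssrnat seq fintype finfun bigop finset binomial.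
Set Implicit Arguments. Unset Strict Implicit. Unset Printing Implicit Defensive.

Section Pat.
Variables (k : nat) (pi : 'S_k).

Definition copyS N (S : {set 'I_N * 'I_N})
  (xy : {ffun 'I_k -> 'I_N} * {ffun 'I_k -> 'I_N}) : bool :=
  [&& incr_idx xy.1, incr_idx xy.2 & [forall i, (xy.1 i, xy.2 (pi i)) \in S]].

Definition ncop N (S : {set 'I_N * 'I_N}) := #|[set xy | copyS S xy]|.

Lemma incrP N (x : {ffun 'I_k -> 'I_N}) (i j : 'I_k) : incr_idx x -> (i < j)%N -> (x i < x j)%N.
Proof. by move=> /forallP /(_ i) /forallP /(_ j) /implyP; apply. Qed.

Lemma incrI N (x : {ffun 'I_k -> 'I_N}) : (forall i j : 'I_k, (i < j)%N -> (x i < x j)%N) -> incr_idx x.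
Proof. by move=> h; apply/forallP=> i; apply/forallP=> j; apply/implyP; apply: h. Qed.

Lemma incr_inj N (x : {ffun 'I_k -> 'I_N}) : incr_idx x -> injective x.
Proof.
move=> hx i j e; apply/eqP; case: (ltngtP i j) => [h|h|/val_inj -> //].
- by have := incrP hx h; rewrite e ltnn.
- by have := incrP hx h; rewrite e ltnn.
Qed.

Lemma mono_lt N N' (g : 'I_N -> 'I_N') (hg : forall x y : 'I_N, (x <= y)%N -> (g x <= g y)%N) (x y : 'I_N) :
  (g x < g y)%N -> (x < y)%N.
Proof. rewrite !ltnNge; apply: contra => /hg; done. Qed.

Lemma ncop_lift N N' (gr gc : 'I_N -> 'I_N')
  (hr : forall x y : 'I_N, (x <= y)%N -> (gr x <= gr y)%N)
  (hc : forall x y : 'I_N, (x <= y)%N -> (gc x <= gc y)%N) (S : {set 'I_N * 'I_N}) :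
  (ncop [set (gr p.1, gc p.2) | p in S] <= ncop S)%N.
Proof.
pose g (xy : {ffun 'I_k -> 'I_N} * {ffun 'I_k -> 'I_N}) :=
  ([ffun i => gr (xy.1 i)], [ffun j => gc (xy.2 j)]).
apply: (leq_trans _ (leq_imset_card g _)); apply: subset_leq_card.
apply/subsetP=> [[a b]]; rewrite inE => /and3P[ha hb /forallP hab].
have: forall i, exists p : 'I_N * 'I_N, (p \in S) && ((gr p.1, gc p.2) == (a i, b (pi i))).
  move=> i; have := hab i => /imsetP[p pS e]; exists p; rewrite pS /=; apply/eqP; exact: esym.
case/fin_all_exists=> P hP.
have hP1 i : P i \in S by case/andP: (hP i).
have hP2 i : gr (P i).1 = a i by case/andP: (hP i) => _ /eqP [].
have hP3 i : gc (P i).2 = b (pi i) by case/andP: (hP i) => _ /eqP [].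
pose x := [ffun i => (P i).1]; pose y := [ffun j => (P ((pi^-1)%g j)).2].
apply/imsetP; exists (x, y).
  rewrite inE; apply/and3P; split.
  - apply: incrI => i j lij; rewrite !ffunE; apply: (mono_lt hr); rewrite !hP2.
    exact: incrP ha lij.
  - apply: incrI => i j lij; rewrite !ffunE; apply: (mono_lt hc); rewrite !hP3 !permKV.
    exact: incrP hb lij.
  - apply/forallP=> i; rewrite /= !ffunE permK; case: (P i) (hP1 i) => //.
rewrite /g /=; congr pair; apply/ffunP=> i; rewrite !ffunE ?hP2 //.
by rewrite hP3 permKV.
Qed.

End Pat.

Lemma card_le_inj (T : finType) (A : {set T}) (f : T -> nat) t :
  {in A &, injective f} -> (forall x, x \in A -> (f x < t)%N) -> (#|A| <= t)%N.
Proof.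
move=> finj fb; rewrite cardE -(size_map f) -[t in (_ <= t)%N](size_iota 0).
apply: uniq_leq_size.
  rewrite map_inj_in_uniq ?enum_uniq // => x y; rewrite !mem_enum; exact: finj.
move=> z /mapP [x]; rewrite mem_enum => /fb xA ->; by rewrite mem_iota.
Qed.

Lemma enum_incr k N (X : {set 'I_N}) : (k <= #|X|)%N ->
  exists f : {ffun 'I_k -> 'I_N}, incr_idx f && [forall i, f i \in X].
Proof.
move=> hk.
have inc_A : sorted ltn (map val (enum X)).
  rewrite -[enum _](eq_filter (mem_enum _)).
  rewrite -(eq_filter (mem_map val_inj _)) -filter_map.
  by rewrite (sorted_filter ltn_trans) // unlock val_ord_enum iota_ltn_sorted.
pose o (i : 'I_k) : 'I_#|X| := Ordinal (leq_trans (ltn_ord i) hk).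
exists [ffun i => enum_val (o i)]; apply/andP; split; last first.
  by apply/forallP=> i; rewrite ffunE enum_valP.
apply/forallP=> i; apply/forallP=> j; apply/implyP=> lij; rewrite !ffunE.
have x0 := enum_val (o i).
rewrite !(enum_val_nth x0).
have sz : size (enum X) = #|X| by rewrite cardE.
rewrite -!(nth_map x0 0 val) ?sz ?ltn_ord //.
apply: (sorted_ltn_nth ltn_trans 0 inc_A); rewrite ?inE ?size_map ?sz ?ltn_ord //.
Qed.

Section Rank.
Variables (N K : nat) (R : {set 'I_N}).
Hypothesis K0 : (0 < K)%N.

Definition rk (x : 'I_N) := #|[set y in R | (y < x)%N]|.

Lemma rk_le x : (rk x <= x)%N.
Proof.
apply: (@card_le_inj _ _ val) => [y z _ _ /val_inj //|y]; by rewrite inE => /andP[].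
Qed.

Lemma rk_mono (x y : 'I_N) : (x <= y)%N -> (rk x <= rk y)%N.
Proof.
move=> h; apply: subset_leq_card; apply/subsetP=> z; rewrite !inE => /andP[-> /= zx].
exact: leq_trans zx h.
Qed.

Lemma rk_lt (x y : 'I_N) : x \in R -> (x < y)%N -> (rk x < rk y)%N.
Proof.
move=> xR xy; apply: proper_card; rewrite properE; apply/andP; split.
  apply/subsetP=> z; rewrite !inE => /andP[-> /= zx]; exact: ltn_trans zx xy.
apply/subsetPn; exists x; by rewrite !inE ?xR ?xy ?ltnn.
Qed.

Lemma rk_bound x : x \in R -> (rk x < #|R|)%N.
Proof.
move=> xR; apply: proper_card; rewrite properE; apply/andP; split.
  by apply/subsetP=> z; rewrite !inE => /andP[].
apply/subsetPn; exists x => //; by rewrite !inE ltnn andbF.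
Qed.

Lemma grp_lt x : (rk x %/ K < N)%N.
Proof. exact: leq_ltn_trans (leq_div _ _) (leq_ltn_trans (rk_le x) (ltn_ord x)). Qed.

Definition grp (x : 'I_N) : 'I_N := Ordinal (grp_lt x).

Lemma grp_mono (x y : 'I_N) : (x <= y)%N -> (grp x <= grp y)%N.
Proof. by move=> h; rewrite /= leq_div2r // rk_mono. Qed.

Lemma grp_card (a : nat) : (#|[set x in R | grp x == a :> nat]| <= K)%N.
Proof.
apply: (@card_le_inj _ _ (fun x => rk x %% K)); last by move=> x _; rewrite ltn_mod.
move=> x y; rewrite !inE => /andP[xR /eqP ea] /andP[yR /eqP eb] e.
have e2 : rk x = rk y by rewrite (divn_eq (rk x) K) (divn_eq (rk y) K) e; rewrite /= in ea eb; rewrite ea eb.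
case: (ltngtP x y) => [h|h|/val_inj //].
  by have := rk_lt xR h; rewrite e2 ltnn.
by have := rk_lt yR h; rewrite e2 ltnn.
Qed.

End Rank.

Section Wide.
Variables (k : nat) (pi : 'S_k).
Hypothesis hk : (0 < k)%N.
Variables (N K : nat) (S : {set 'I_N * 'I_N}) (gr gc : 'I_N -> 'I_N) (C : {set 'I_N}).
Hypothesis hr : forall x y : 'I_N, (x <= y)%N -> (gr x <= gr y)%N.
Hypothesis hc : forall x y : 'I_N, (x <= y)%N -> (gc x <= gc y)%N.
Hypothesis hSC : forall p, p \in S -> p.2 \in C.
Hypothesis hG : forall b, (#|[set y in C | gc y == b]| <= K)%N.
Hypothesis free : ncop pi S = 0.

Definition blk (a b : 'I_N) := [set p in S | (gr p.1 == a) && (gc p.2 == b)].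
Definition Col a b := [set p.2 | p in blk a b].

Lemma ncop0 xy : ~~ copyS pi S xy.
Proof.
apply/negP=> h.
have e : [set xy | copyS pi S xy] = set0 by apply/eqP; rewrite -cards_eq0; apply/eqP; exact: free.
have : xy \in [set xy | copyS pi S xy] by rewrite inE.
by rewrite e inE.
Qed.

Lemma wide_claim b : (#|[set a | (k <= #|Col a b|)%N]| <= (k - 1) * 2 ^ K)%N.
Proof.
set W := [set a | _].
pose G := [set y in C | gc y == b].
have colG a : Col a b \subset G.
  apply/subsetP=> y /imsetP [p]; rewrite inE => /andP [pS /andP[_ /eqP e]] ->.
  by rewrite inE hSC // e eqxx.
pose phi a := odflt set0 [pick Y : {set 'I_N} | (Y \subset Col a b) && (#|Y| == k)].
have phiP a : a \in W -> (phi a \subset Col a b) && (#|phi a| == k).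
  rewrite inE => ha; rewrite /phi; case: pickP => [Y -> //|].
  have [f /andP [finc /forallP fin]] := enum_incr ha.
  move/(_ (f @: setT)); rewrite card_imset; last exact: incr_inj finc.
  rewrite cardsT card_ord eqxx andbT; move/negP; case.
  by apply/subsetP=> y /imsetP [i _ ->].
have fib Y : (#|[set a in W | phi a == Y]| <= k - 1)%N.
  rewrite leqNgt; apply/negP; rewrite subn1 prednK // => hF.
  have [a /andP [ainc /forallP ain]] := enum_incr hF.
  have ai i : (a i \in W) && (phi (a i) == Y) by have := ain i; rewrite inE.
  pose i0 : 'I_k := Ordinal hk.
  have eY : #|Y| = k.
    case/andP: (ai i0) => aW /eqP <-; by case/andP: (phiP _ aW) => _ /eqP.
  have YC i : Y \subset Col (a i) b.
    case/andP: (ai i) => aW /eqP <-; by case/andP: (phiP _ aW).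
  have [y /andP [yinc /forallP yin]] : exists f : {ffun 'I_k -> 'I_N}, incr_idx f && [forall i, f i \in Y].
    by apply: enum_incr; rewrite eY.
  have: forall i, exists p : 'I_N * 'I_N, (p \in blk (a i) b) && (p.2 == y (pi i)).
    move=> i; have := subsetP (YC i) _ (yin (pi i)) => /imsetP [p pb e].
    by exists p; rewrite pb e eqxx.
  case/fin_all_exists=> P hP.
  pose x := [ffun i => (P i).1].
  apply: (negP (ncop0 (x, y))); apply/and3P; split => //.
    apply: incrI => i j lij; rewrite !ffunE; apply: (mono_lt hr).
    have := hP i; have := hP j; rewrite !inE => /andP [/andP [_ /andP[/eqP -> _]] _].
    move=> /andP [/andP [_ /andP[/eqP -> _]] _]; exact: incrP ainc lij.
  apply/forallP=> i; rewrite /= ffunE.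
  have := hP i; rewrite inE => /andP [/andP [pS _] /eqP <-]; by case: (P i) pS.
rewrite -sum1_card (partition_big_imset phi) /=.
apply: (@leq_trans (\sum_(Y in phi @: W) (k - 1))).
  apply: leq_sum => Y _; rewrite sum1dep_card; exact: (leq_trans _ (fib Y)).
rewrite sum_nat_const mulnC leq_mul2l; apply/orP; right.
have sub : phi @: W \subset powerset G.
  apply/subsetP=> Y /imsetP [a aW ->]; rewrite powersetE.
  case/andP: (phiP _ aW) => h _; exact: subset_trans h (colG a).
apply: (leq_trans (subset_leq_card sub)); rewrite card_powerset leq_pexp2l //; exact: hG.
Qed.

End Wide.

Section WideTotal.
Variables (k : nat) (pi : 'S_k).
Hypothesis hk : (0 < k)%N.
Variables (N K : nat) (S : {set 'I_N * 'I_N}) (gr gc : 'I_N -> 'I_N) (C : {set 'I_N}).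
Hypothesis hr : forall x y : 'I_N, (x <= y)%N -> (gr x <= gr y)%N.
Hypothesis hc : forall x y : 'I_N, (x <= y)%N -> (gc x <= gc y)%N.
Hypothesis hSC : forall p, p \in S -> p.2 \in C.
Hypothesis hG : forall b, (#|[set y in C | gc y == b]| <= K)%N.
Hypothesis free : ncop pi S = 0.

Lemma wide_total t : (forall y, y \in C -> (gc y < t)%N) ->
  (#|[set q : 'I_N * 'I_N | (k <= #|Col S gr gc q.1 q.2|)%N]| <= t * ((k - 1) * 2 ^ K))%N.
Proof.
move=> ht; set Q := [set q | _].
rewrite -sum1_card (partition_big_imset snd) /=.
apply: (@leq_trans (\sum_(b in snd @: Q) ((k - 1) * 2 ^ K))).
  apply: leq_sum => b _; rewrite sum1dep_card.
  apply: leq_trans (wide_claim hk hr hSC hG free b).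
  apply: (leq_trans _ (leq_imset_card (fun a => (a, b)) _)); apply: subset_leq_card.
  apply/subsetP=> [[a b']]; rewrite !inE /= => /andP [h /eqP e]; subst b'.
  by apply/imsetP; exists a => //; rewrite inE.
rewrite sum_nat_const leq_mul2r; apply/orP; right.
apply: (@card_le_inj _ _ val) => [x y _ _ /val_inj //|b /imsetP [q]].
rewrite inE => hq ->.
have : (0 < #|Col S gr gc q.1 q.2|)%N by exact: leq_trans hk hq.
case/card_gt0P => y /imsetP [p]; rewrite inE => /andP [pS /andP [_ /eqP <-]] _.
exact: ht (hSC pS).
Qed.
End WideTotal.

Lemma ncop_transp k (pi : 'S_k) N (S : {set 'I_N * 'I_N}) :
  ncop pi S = 0 -> ncop (pi^-1)%g [set (p.2, p.1) | p in S] = 0.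
Proof.
move=> h; apply/eqP; rewrite cards_eq0; apply/eqP/setP=> [[x y]]; rewrite !inE.
apply/negP=> /and3P [hx hy /forallP hxy].
have: (y, x) \in [set xy | copyS pi S xy].
  rewrite inE; apply/and3P; split => //; apply/forallP=> i.
  have := hxy (pi i); rewrite /= permK => /imsetP [p pS [-> ->]]; by case: p pS.
have e : [set xy | copyS pi S xy] = set0 by apply/eqP; rewrite -cards_eq0; apply/eqP.
by rewrite e inE.
Qed.


Section MT.
Variables (k : nat) (pi : 'S_k).
Hypothesis hk : (1 < k)%N.

Definition KK := k * k.
Definition W0 := (k - 1) * 2 ^ KK.
Definition Amt := 2 * KK * KK * W0 + KK * KK.

Lemma nat_sum_ind (T : finType) (A : {set T}) (P : pred T) :
  \sum_(q in A) (P q : nat) = #|[set q in A | P q]|.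
Proof.
rewrite -sum1dep_card big_mkcondr /=; apply: eq_bigr => q _; by case: (P q).
Qed.

Lemma MT n : forall N (R C : {set 'I_N}) (S : {set 'I_N * 'I_N}),
  S \subset setX R C -> (#|R| <= n)%N -> (#|C| <= n)%N -> ncop pi S = 0 ->
  (#|S| <= Amt * n)%N.
Proof.
have hk0 : (0 < k)%N by exact: ltnW.
have K0 : (0 < KK)%N by rewrite /KK muln_gt0 hk0.
elim/ltn_ind: n => n IH N R C S hS hR hC free.
have [small|big] := ltnP n (KK * KK).
  apply: (leq_trans (subset_leq_card hS)); rewrite cardsX.
  apply: (leq_trans (leq_mul hR hC)); rewrite leq_mul2r /Amt; apply/orP; right.
  apply: leq_trans (ltnW small) _; exact: leq_addl.
pose gr := grp KK R; pose gc := grp KK C.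
have hr : forall x y : 'I_N, (x <= y)%N -> (gr x <= gr y)%N by move=> x y; exact: grp_mono.
have hc : forall x y : 'I_N, (x <= y)%N -> (gc x <= gc y)%N by move=> x y; exact: grp_mono.
pose t := (n.-1 %/ KK).+1.
have gt (X : {set 'I_N}) x : x \in X -> (#|X| <= n)%N -> (grp KK X x < t)%N.
  move=> xX hX; rewrite /= ltnS leq_div2r //.
  have := leq_trans (rk_bound xX) hX; lia.
pose cm (p : 'I_N * 'I_N) := (gr p.1, gc p.2).
pose S' := cm @: S.
have hS' : S' \subset setX (gr @: R) (gc @: C).
  apply/subsetP=> q /imsetP [p pS ->]; have := subsetP hS p pS; rewrite !inE => /andP [p1 p2].
  by rewrite /cm /= !imset_f.
have hcard (X : {set 'I_N}) : (#|X| <= n)%N -> (#|grp KK X @: X| <= t)%N.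
  move=> hX; apply: (@card_le_inj _ _ val) => [x y _ _ /val_inj //|a /imsetP [x xX ->]].
  exact: gt.
have free' : ncop pi S' = 0.
  by apply/eqP; rewrite -leqn0 -free; exact: ncop_lift.
have tn : (t < n)%N.
  have h1 := leq_trunc_div n.-1 KK.
  have h2 : (4 <= KK)%N by rewrite /KK; nia.
  move: h1 h2 big; rewrite /t; set q := (n.-1 %/ KK); nia.
have IHS' := IH t tn N (gr @: R) (gc @: C) S' hS' (hcard R hR) (hcard C hC) free'.
pose St := [set (p.2, p.1) | p in S].
have freeT : ncop (pi^-1)%g St = 0 by exact: ncop_transp.
have hSC : forall p, p \in S -> p.2 \in C.
  by move=> p pS; have := subsetP hS p pS; rewrite inE => /andP [].
have hSR : forall p, p \in St -> p.2 \in R.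
  move=> p /imsetP [q qS ->]; by have := subsetP hS q qS; rewrite inE => /andP [].
have hGC : forall b, (#|[set y in C | gc y == b]| <= KK)%N by move=> b; exact: grp_card.
have hGR : forall b, (#|[set y in R | gr y == b]| <= KK)%N by move=> b; exact: grp_card.
have wideB := wide_total hk0 hr hSC hGC free (fun y yC => gt C y yC hC).
have tallB := wide_total hk0 hc hSR hGR freeT (fun y yR => gt R y yR hR).
have RowE a b : [set p.1 | p in blk S gr gc a b] = Col St gc gr b a.
  apply/setP=> x; apply/imsetP/imsetP => [[p]|[p]].
    rewrite inE => /andP [pS hp] ->; exists (p.2, p.1) => //.
    by rewrite inE imset_f //= andbC.
  rewrite inE => /andP [/imsetP [q qS ->] hq] ->; exists q => //.
  by move: hq; rewrite inE qS /= andbC.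
have blkB a b : (#|blk S gr gc a b| <= (k - 1) * (k - 1) +
    KK * KK * (k <= #|Col S gr gc a b|)%N + KK * KK * (k <= #|Col St gc gr b a|)%N)%N.
  have sub : blk S gr gc a b \subset setX [set p.1 | p in blk S gr gc a b] (Col S gr gc a b).
    by apply/subsetP=> p pb; rewrite inE !imset_f.
  apply: (leq_trans (subset_leq_card sub)); rewrite cardsX RowE.
  have cR : (#|Col St gc gr b a| <= KK)%N.
    rewrite -RowE; apply: leq_trans (hGR a); apply: subset_leq_card.
    apply/subsetP=> x /imsetP [p]; rewrite inE => /andP [pS /andP [/eqP ea _]] ->.
    by rewrite inE ea eqxx andbT; have := subsetP hS p pS; rewrite inE => /andP [].
  have cC : (#|Col S gr gc a b| <= KK)%N.
    apply: leq_trans (hGC b); apply: subset_leq_card.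
    apply/subsetP=> x /imsetP [p]; rewrite inE => /andP [pS /andP [_ /eqP eb]] ->.
    by rewrite inE eb eqxx andbT hSC.
  have [h1|h1] := leqP k #|Col S gr gc a b|; have [h2|h2] := leqP k #|Col St gc gr b a|.
  idtac.
  - rewrite !muln1; apply: leq_trans (leq_mul cR cC) _; nia.
  - rewrite !muln1 muln0; apply: leq_trans (leq_mul cR cC) _; nia.
  - rewrite !muln1 muln0; apply: leq_trans (leq_mul cR cC) _; nia.
  - rewrite !muln0 !addn0; apply: leq_mul; lia.
have sumE : #|S| = (\sum_(q in S') #|blk S gr gc q.1 q.2|)%N.
  rewrite -sum1_card (partition_big_imset cm) /=; apply: eq_bigr => q _.
  rewrite sum1dep_card; apply: eq_card => p; rewrite !inE.
  by case: q => a b; rewrite /cm xpair_eqE.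
have step : (#|S| <= (k - 1) * (k - 1) * #|S'| + KK * KK * (t * W0) + KK * KK * (t * W0))%N.
  rewrite sumE; apply: (@leq_trans (\sum_(q in S') ((k - 1) * (k - 1) +
    KK * KK * (k <= #|Col S gr gc q.1 q.2|)%N + KK * KK * (k <= #|Col St gc gr q.2 q.1|)%N))).
    by apply: leq_sum => q _; exact: blkB.
  rewrite !big_split /= sum_nat_const mulnC -!addnA leq_add2l.
  rewrite -!big_distrr /= !nat_sum_ind; apply: leq_add; rewrite leq_mul2l; apply/orP; right.
    apply: leq_trans wideB; apply: subset_leq_card; apply/subsetP=> q; rewrite !inE.
    by case/andP.
  apply: leq_trans tallB; rewrite -(card_imset _ (@inv_inj _ (fun q : 'I_N * 'I_N => (q.2, q.1)) _)); last by case.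
  apply: subset_leq_card; apply/subsetP=> q /imsetP [p]; rewrite inE => /andP [_ h] ->.
  by rewrite inE.
apply: (leq_trans step).
have tK : (KK * t <= n.-1 + KK)%N.
  rewrite /t mulnS addnC leq_add2r mulnC; exact: leq_trunc_div.
have tn2 : ((KK - 1) * t <= n)%N.
  rewrite -(leq_pmul2l K0) mulnCA.
  apply: leq_trans (_ : ((KK - 1) * (n.-1 + KK) <= _)%N); first by rewrite leq_mul2l tK orbT.
  move: big K0; set KK' := KK; case: (n) => // n' /=; nia.
have hA : ((k - 1) * (k - 1) * Amt + 2 * KK * KK * W0 <= (KK - 1) * Amt)%N.
  rewrite /Amt /KK; nia.
apply: leq_trans (_ : ((KK - 1) * Amt * t <= _)%N).
  apply: leq_trans (_ : ((k - 1) * (k - 1) * (Amt * t) + 2 * KK * KK * W0 * t <= _)%N).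
    rewrite -addnA leq_add ?leq_mul2l ?IHS' ?orbT //; nia.
  rewrite mulnA -mulnDl leq_mul2r hA orbT //.
rewrite mulnAC mulnC leq_mul2l tn2 orbT //.
Qed.
End MT.


Section Super.
Variables (k : nat) (pi : 'S_k).
Hypothesis hk : (1 < k)%N.

Lemma removal N (R C : {set 'I_N}) (S : {set 'I_N * 'I_N}) r :
  S \subset setX R C -> (#|R| <= r)%N -> (#|C| <= r)%N ->
  (#|S| <= Amt k * r + ncop pi S)%N.
Proof.
move=> hS hR hC.
have hk0 : (0 < k)%N by exact: ltnW.
pose i0 : 'I_k := Ordinal hk0.
pose Q := [set xy | copyS pi S xy].
pose pt (xy : {ffun 'I_k -> 'I_N} * {ffun 'I_k -> 'I_N}) := (xy.1 i0, xy.2 (pi i0)).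
pose D := pt @: Q.
have free : ncop pi (S :\: D) = 0.
  apply/eqP; rewrite cards_eq0; apply/eqP/setP=> xy; rewrite !inE.
  apply/negP=> /and3P [h1 h2 /forallP h3].
  have xyQ : xy \in Q.
    rewrite inE; apply/and3P; split => //; apply/forallP=> i.
    by have := h3 i; rewrite inE => /andP [].
  by have := h3 i0; rewrite inE (imset_f pt xyQ).
have h1 : (#|S :\: D| <= Amt k * r)%N.
  apply: (@MT k pi hk r _ R C) => //.
  exact: subset_trans (subsetDl S D) hS.
have h2 : (#|S| <= #|S :\: D| + #|D|)%N.
  have sub : S \subset (S :\: D) :|: D.
    by apply/subsetP=> p pS; rewrite !inE pS andbT; case: (p \in D).
  apply: leq_trans (subset_leq_card sub) _; exact: (leq_card_setU _ _).1.
apply: (leq_trans h2); apply: leq_add => //; exact: leq_imset_card.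
Qed.

Variable n : nat.
Definition Bs r := [set X : {set 'I_n} | #|X| == r].

Lemma bcount r (X : {set 'I_n}) : (#|X| <= r)%N ->
  #|[set R in Bs r | X \subset R]| = 'C(n - #|X|, r - #|X|).
Proof.
move=> hX.
have cC : #|~: X| = (n - #|X|)%N by have := cardsC X; rewrite card_ord; lia.
rewrite -cC -cards_draws.
pose f (R : {set 'I_n}) := R :\: X.
rewrite -(@card_in_imset _ _ f).
  apply: eq_card => Y; rewrite !inE; apply/imsetP/andP => [[R]|[YX /eqP cY]].
    rewrite !inE => /andP [/eqP cR XR] ->; split.
      by rewrite /f setDE subsetIr.
    by rewrite /f cardsDS // cR.
  exists (Y :|: X).
    rewrite !inE subsetUr andbT cardsU.
    have -> : Y :&: X = set0.
      apply/setP=> z; rewrite !inE; apply/negP => /andP [zY zX].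
      by have := subsetP YX z zY; rewrite inE zX.
    by rewrite cards0 subn0 cY subnK.
  apply/setP=> z; rewrite /f !inE; case zX: (z \in X); rewrite ?andbF ?orbT ?orbF //=.
  by apply/negP => zY; have := subsetP YX z zY; rewrite inE zX.
move=> R1 R2; rewrite !inE => /andP [_ h1] /andP [_ h2] e.
apply/setP=> z; have := congr1 (fun A : {set 'I_n} => z \in A) e; rewrite /f !inE.
case zX: (z \in X) => /=; last by [].
by rewrite (subsetP h1 z zX) (subsetP h2 z zX).
Qed.


Lemma dc (I : finType) (P : {set I}) (fx fy : I -> {set 'I_n}) j r : (j <= r)%N ->
  (forall i, i \in P -> #|fx i| = j /\ #|fy i| = j) ->
  (\sum_(R in Bs r) \sum_(C in Bs r) #|[set i in P | (fx i \subset R) && (fy i \subset C)]|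
   = #|P| * 'C(n - j, r - j) ^ 2)%N.
Proof.
move=> hj hP.
have e1 R C : #|[set i in P | (fx i \subset R) && (fy i \subset C)]| =
    (\sum_(i in P) (fx i \subset R : nat) * (fy i \subset C : nat))%N.
  rewrite -nat_sum_ind; apply: eq_bigr => i _; by case: (fx i \subset R); case: (fy i \subset C).
under eq_bigr do under eq_bigr do rewrite e1.
under eq_bigr do rewrite exchange_big /=.
rewrite exchange_big /= -sum_nat_const; apply: eq_bigr => i iP.
rewrite -big_distrlr /= !nat_sum_ind.
have [h1 h2] := hP i iP.
by rewrite !bcount ?h1 ?h2 // expnS expn1.
Qed.

Lemma copies_restrict (S : {set 'I_n * 'I_n}) (R C : {set 'I_n}) xy :
  copyS pi (S :&: setX R C) xy =
  copyS pi S xy && ((xy.1 @: setT \subset R) && (xy.2 @: setT \subset C)).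
Proof.
case: xy => x y; rewrite /copyS /=.
case: (incr_idx x) (incr_idx y) => [] [] //=.
apply/forallP/andP => [h|[/forallP h /andP [hR hC]]].
  split; first by apply/forallP=> i; have := h i; rewrite inE => /andP [].
  apply/andP; split; apply/subsetP=> z /imsetP [i _ ->].
    by have := h i; rewrite !inE => /andP [_ /andP []].
  by have := h ((pi^-1)%g i); rewrite permKV !inE => /andP [_ /andP []].
move=> i; rewrite !inE h /=; apply/andP; split.
  by apply: (subsetP hR); apply: imset_f; rewrite inE.
by apply: (subsetP hC); apply: imset_f; rewrite inE.
Qed.

Lemma ss_main r (S : {set 'I_n * 'I_n}) : (k <= r)%N -> (r <= n)%N ->
  (#|S| * 'C(n - 1, r - 1) ^ 2 <= 'C(n, r) ^ 2 * (Amt k * r) + ncop pi S * 'C(n - k, r - k) ^ 2)%N.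
Proof.
move=> hkr hrn.
have hk1 : (1 <= r)%N by apply: leq_trans hkr; exact: ltnW.
have L : (\sum_(R in Bs r) \sum_(C in Bs r) #|S :&: setX R C| = #|S| * 'C(n - 1, r - 1) ^ 2)%N.
  rewrite -(@dc _ S (fun p => [set p.1]) (fun p => [set p.2]) 1 r) //; last by move=> *; rewrite !cards1.
  apply: eq_bigr => R _; apply: eq_bigr => C _; apply: eq_card => p.
  by rewrite !inE !sub1set.
have Rr : (\sum_(R in Bs r) \sum_(C in Bs r) ncop pi (S :&: setX R C) = ncop pi S * 'C(n - k, r - k) ^ 2)%N.
  rewrite -(@dc _ [set xy | copyS pi S xy] (fun xy => xy.1 @: setT) (fun xy => xy.2 @: setT) k r) //.
    apply: eq_bigr => R _; apply: eq_bigr => C _; apply: eq_card => xy.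
    by rewrite !inE copies_restrict.
  move=> xy; rewrite inE => /and3P [h1 h2 _].
  by rewrite !card_imset ?cardsT ?card_ord //; apply: incr_inj.
rewrite -L -Rr.
have cB : #|Bs r| = 'C(n, r) by rewrite /Bs card_draws card_ord.
have E : ('C(n, r) ^ 2 * (Amt k * r) = \sum_(R in Bs r) \sum_(C in Bs r) (Amt k * r))%N.
  by rewrite !sum_nat_const cB mulnA ; lia.
rewrite E -big_split /=; apply: leq_sum => R Rb; rewrite -big_split /=; apply: leq_sum => C Cb.
apply: (@removal n R C _ r).
  by apply/subsetP=> p; rewrite inE => /andP [].
  by move: Rb; rewrite inE => /eqP ->.
by move: Cb; rewrite inE => /eqP ->.
Qed.

End Super.


Lemma binF2 n r j : (j <= r)%N -> (r <= n)%N ->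
  ('C(n - j, r - j) * n ^ j <= 'C(n, r) * r ^ j)%N.
Proof.
move=> hj hrn; elim: j hj => [|j IH] hj; first by rewrite !expn0 !muln1 !subn0.
have hj' : (j <= r)%N by exact: ltnW.
have IH' := IH hj'.
have hnj : (0 < n - j)%N by rewrite subn_gt0; exact: leq_trans hj hrn.
have e := mul_bin_diag (n - j) (r - j.+1).
have e1 : (n - j).-1 = (n - j.+1)%N by rewrite subnS.
have e2 : (r - j.+1).+1 = (r - j)%N by rewrite subnS prednK // subn_gt0.
rewrite e1 e2 in e.
rewrite -(leq_pmul2l hnj) !mulnA e.
rewrite !expnS.
have h1 : ((r - j) * n <= (n - j) * r)%N.
  nia.
apply: (@leq_trans ((r - j) * n * ('C(n - j, r - j) * n ^ j))).
  by rewrite -!mulnA leq_mul2l; apply/orP; right; rewrite mulnCA.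
apply: (@leq_trans ((r - j) * n * ('C(n, r) * r ^ j))).
  by rewrite leq_mul2l IH' orbT.
apply: (@leq_trans ((n - j) * r * ('C(n, r) * r ^ j))).
  by rewrite leq_mul2r h1 orbT.
rewrite -!mulnA leq_mul2l; apply/orP; right.
by rewrite mulnCA.
Qed.

Section SS.
Variables (k : nat) (pi : 'S_k).
Hypothesis hk : (1 < k)%N.

Lemma Amt_ge : (k <= Amt k)%N.
Proof. rewrite /Amt /KK; apply: leq_trans (leq_addl _ _) ; rewrite -!mulnA; apply: leq_pmulr; rewrite !muln_gt0; lia. Qed.

Lemma supersat n (S : {set 'I_n * 'I_n}) :
  (4 * Amt k * n <= #|S|)%N ->
  (#|S| ^ (2 * k - 1) <= (4 * Amt k) ^ (2 * k - 1) * ncop pi S * n ^ (2 * k - 2))%N.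
Proof.
move=> hw.
set A := Amt k; set w := #|S|; set c := ncop pi S.
have Ak : (k <= A)%N := Amt_ge.
have wn : (w <= n * n)%N.
  by rewrite /w; apply: leq_trans (max_card _) _; rewrite card_prod card_ord.
have [w0|wpos] := posnP w; first by rewrite w0 exp0n //; lia.
have npos : (0 < n)%N by case: (n) wn => //; lia.
have h4A : (4 * A <= n)%N by rewrite -(leq_pmul2r npos); exact: leq_trans hw wn.
have n4 : (4 <= n)%N by lia.
pose r := (2 * A * (n * n) + w - 1) %/ w.
have hr := divn_eq (2 * A * (n * n) + w - 1) w.
have hm := ltn_pmod (2 * A * (n * n) + w - 1) wpos.
rewrite -/r in hr.
set rem := (_ %% w)%N in hr hm.
have wr1 : (2 * A * (n * n) <= r * w)%N by lia.
have wr2 : (r * w <= 2 * A * (n * n) + w)%N by lia.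
have kr : (k <= r)%N by nia.
have rn : (r <= n)%N by nia.
have rpos : (0 < r)%N by lia.
have ssm := @ss_main k pi hk n r S kr rn.
have F1 : (n * 'C(n - 1, r - 1) = r * 'C(n, r))%N.
  by have := mul_bin_diag n (r - 1); rewrite !subn1 prednK.
have F2 := binF2 kr rn.
have Bpos : (0 < 'C(n, r))%N by rewrite bin_gt0.
set b1 := 'C(n - 1, r - 1) in ssm F1; set b2 := 'C(n - k, r - k) in ssm F2;
set B := 'C(n, r) in ssm F1 F2 Bpos.
set p := (2 * k - 2)%N; set q := (2 * k - 1)%N.
have eq : q = p.+1 by rewrite /p /q; lia.
have e2k : (2 * k = p + 2)%N by rewrite /p; lia.
have st1 : (w * b1 ^ 2 * n ^ (2 * k) <= (B ^ 2 * (A * r) + c * b2 ^ 2) * n ^ (2 * k))%N.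
  by rewrite leq_mul2r ssm orbT.
have eL : (w * b1 ^ 2 * n ^ (2 * k) = B ^ 2 * (w * r ^ 2 * n ^ p))%N.
  rewrite e2k expnD.
  have h : (b1 ^ 2 * n ^ 2 = B ^ 2 * r ^ 2)%N by rewrite -!expnMn mulnC F1 mulnC.
  rewrite (mulnC (n ^ p)) mulnA -(mulnA w _ (n ^ 2)) h.
  rewrite !mulnA (mulnC w); lia.
have eR : (c * b2 ^ 2 * n ^ (2 * k) <= B ^ 2 * (c * r ^ (2 * k)))%N.
  rewrite mulnCA (mulnC 2) !expnM -mulnA -expnMn.
  apply: (@leq_trans (c * (B * r ^ k) ^ 2)); first by rewrite leq_mul2l leq_exp2r ?F2 ?orbT.
  by rewrite expnMn mulnCA.
have st2 : (B ^ 2 * (w * r ^ 2 * n ^ p) <= B ^ 2 * (A * r * n ^ (2 * k) + c * r ^ (2 * k)))%N.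
  rewrite -eL; apply: leq_trans st1 _; rewrite mulnDl mulnDr; apply: leq_add; last exact: eR.
  by rewrite -mulnA.
rewrite leq_pmul2l ?expn_gt0 ?Bpos // in st2.
have e2k' : (r ^ (2 * k) = r * r ^ q)%N by rewrite -expnS; congr (_ ^ _); rewrite /q; lia.
have st3 : (r * (w * r * n ^ p) <= r * (A * n ^ (2 * k) + c * r ^ q))%N.
  have h2 : (r ^ 2 = r * r)%N by rewrite expnS expn1.
  rewrite h2 e2k' in st2; lia.
rewrite leq_pmul2l // in st3.
have st4 : (A * n ^ (2 * k) <= c * r ^ q)%N.
  have : (2 * A * n ^ (2 * k) <= w * r * n ^ p)%N.
    have h : (n ^ 2 = n * n)%N by rewrite expnS expn1.
    rewrite e2k expnD h (mulnC (n ^ p)) mulnA (mulnC w).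
    exact: leq_mul wr1 (leqnn _).
  lia.
have st5 : (A * n ^ (2 * k) * w ^ q <= c * (4 * A * (n * n)) ^ q)%N.
  apply: (@leq_trans (c * (r * w) ^ q)).
    by rewrite expnMn mulnA leq_mul2r st4 orbT.
  rewrite leq_mul2l leq_exp2r ?eq //; apply/orP; right.
  have : (n * n <= A * (n * n))%N by apply: leq_pmull; lia.
  lia.
have eN : ((n * n) ^ q = n ^ (2 * k) * n ^ p)%N.
  have h : (n * n = n ^ 2)%N by rewrite expnS expn1.
  by rewrite h -expnM -expnD; congr (_ ^ _); rewrite /q /p; lia.
move: st5; rewrite expnMn eN.
have npk : (0 < n ^ (2 * k))%N by rewrite expn_gt0 npos.
move=> st5.
have : (n ^ (2 * k) * (A * w ^ q) <= n ^ (2 * k) * ((4 * A) ^ q * c * n ^ p))%N.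
  move: st5; rewrite !mulnA => st; apply: leq_trans _ (leq_trans st _); first by rewrite (mulnC (n ^ (2 * k))).
  by rewrite -(mulnA c) (mulnC c) (mulnC _ (n ^ (2 * k))).
rewrite leq_pmul2l // => h.
apply: leq_trans h; apply: leq_pmull; apply: leq_trans Ak; exact: ltnW.
Qed.
End SS.


Section Count.
Variables (k : nat) (pi : 'S_k).

Definition Fs n m := #|[set S : {set 'I_n * 'I_n} | (ncop pi S <= m)%N]|.

Lemma half_lt n (x : 'I_n) : (x %/ 2 < n.+1 %/ 2)%N.
Proof. have := ltn_ord x; lia. Qed.

Definition half n (x : 'I_n) : 'I_(n.+1 %/ 2) := Ordinal (half_lt x).

Lemma fib_card n (a : 'I_(n.+1 %/ 2)) : (#|[set x : 'I_n | half x == a]| <= 2)%N.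
Proof.
apply: (@card_le_inj _ _ (fun x : 'I_n => x %% 2)); last by move=> x _; rewrite ltn_mod.
move=> x y; rewrite !inE => /eqP ea /eqP eb e; apply: ord_inj.
rewrite (divn_eq x 2) (divn_eq y 2) e.
by move: ea eb => /(congr1 val) /= -> /(congr1 val) /= ->.
Qed.

Lemma count_rec n m :
  (Fs n m <= \sum_(S' in [set S' : {set 'I_(n.+1 %/ 2) * 'I_(n.+1 %/ 2)} | (ncop pi S' <= m)%N])
      2 ^ (4 * #|S'|))%N.
Proof.
set n' := n.+1 %/ 2.
pose cm (p : 'I_n * 'I_n) := (half p.1, half p.2).
pose img (S : {set 'I_n * 'I_n}) := cm @: S.
have hm : forall x y : 'I_n, (x <= y)%N -> (half x <= half y)%N.
  by move=> x y h; rewrite /= leq_div2r.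
rewrite /Fs -sum1_card.
rewrite (partition_big img (fun S' => S' \in [set S' : {set 'I_n' * 'I_n'} | (ncop pi S' <= m)%N])) /=;
  last first.
  move=> S; rewrite !inE => h; apply: leq_trans h; exact: ncop_lift.
apply: leq_sum => S' _.
apply: (@leq_trans #|powerset (cm @^-1: S')|).
  rewrite sum1dep_card; apply: subset_leq_card; apply/subsetP=> S; rewrite !inE => /andP [_ /eqP e].
  apply/subsetP=> p pS; rewrite inE -e; exact: imset_f.
rewrite card_powerset leq_pexp2l //.
rewrite -sum1_card (partition_big cm (fun q => q \in S')) /=; last by move=> p; rewrite inE.
rewrite (mulnC 4) -sum_nat_const; apply: leq_sum => q _; rewrite sum1dep_card.
apply: (@leq_trans #|setX [set x : 'I_n | half x == q.1] [set x : 'I_n | half x == q.2]|).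
  apply: subset_leq_card; apply/subsetP=> p; rewrite !inE => /andP [_ /eqP <-].
  by rewrite !eqxx.
rewrite cardsX; exact: (leq_trans (leq_mul (fib_card q.1) (fib_card q.2))).
Qed.
End Count.

Import Order.TTheory GRing.Theory Num.Theory.
Local Open Scope ring_scope.

Section Real.
Variable R : realType.

Lemma root_pow (a : R) (q : nat) : 0 <= a -> (0 < q)%N -> (a `^ (q%:R)^-1) ^+ q = a.
Proof.
move=> a0 q0; rewrite -powR_mulrn ?powR_ge0 // -powRrM mulVf ?powRr1 //.
by rewrite pnatr_eq0 -lt0n.
Qed.

Lemma pow_le_mono (x y : R) (q : nat) : 0 <= x -> 0 <= y -> (0 < q)%N -> x ^+ q <= y ^+ q -> x <= y.
Proof. by move=> x0 y0 q0; rewrite ler_pXn2r. Qed.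

Lemma two_le_expR1 : 2 <= expR (1 : R).
Proof. by have := expR_ge1Dx (1 : R); rewrite (_ : 1 + 1 = 2) //. Qed.

Lemma pow2_le_expR (j : nat) : (2 : R) ^+ j <= expR j%:R.
Proof.
have e : expR (j%:R : R) = expR 1 ^+ j by rewrite -expRM_natr mul1r.
rewrite e.
by apply: lerXn2r; rewrite ?nnegrE ?two_le_expR1 ?expR_ge0.
Qed.

Lemma frac_pow (j : nat) : (3 / 4 : R) ^+ j.+2 <= (9 / 10) ^+ j.+3.
Proof.
elim: j => [|j IH]; first by rewrite !expr2 !exprS expr0; lra.
rewrite (exprS _ j.+2) (exprS _ j.+3).
apply: ler_pM; [lra | by apply: exprn_ge0; lra | lra | exact: IH].
Qed.


Section Main.
Variables (k : nat) (pi : 'S_k).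
Hypothesis hk : (1 < k)%N.

Definition hh n m : R := powR (m%:R * n%:R ^+ (2 * k - 2)) ((2 * k - 1)%:R)^-1.

Lemma q0 : (0 < 2 * k - 1)%N. Proof. lia. Qed.

Lemma hh_ge0 n m : 0 <= hh n m. Proof. exact: powR_ge0. Qed.

Lemma hh_pow n m : hh n m ^+ (2 * k - 1) = m%:R * n%:R ^+ (2 * k - 2).
Proof. rewrite /hh root_pow //; last exact: q0. Qed.

Definition DD := ((4 * Amt k) ^ (2 * k - 1))%N.

Lemma E_bound n m (S : {set 'I_n * 'I_n}) : (ncop pi S <= m)%N ->
  (#|S|%:R : R) <= (4 * Amt k * n)%:R + DD%:R * hh n m.
Proof.
move=> hm.
have [big|small] := leqP (4 * Amt k * n) #|S|; last first.
  rewrite -[X in X <= _]addr0; apply: lerD; first by rewrite ler_nat ltnW.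
  by rewrite mulr_ge0 ?hh_ge0.
rewrite -[X in X <= _]add0r; apply: lerD => //.
apply: (@pow_le_mono _ _ (2 * k - 1)) => //; first by rewrite mulr_ge0 ?hh_ge0.
  exact: q0.
rewrite exprMn hh_pow -!natrX -!natrM ler_nat.
have ss := supersat pi hk big.
apply: leq_trans ss _.
have D1 : (0 < DD)%N by rewrite /DD expn_gt0 muln_gt0 /= /Amt /KK; apply/orP; left; lia.
rewrite mulnA; apply: leq_mul => //; apply: leq_mul => //.
rewrite -/DD -{1}(expn1 DD); apply: leq_pexp2l => //; lia.
Qed.

Lemma hh_shrink n n' m : (4 * n' <= 3 * n)%N -> hh n' m <= 9 / 10 * hh n m.
Proof.
move=> hn.
apply: (@pow_le_mono _ _ (2 * k - 1)); first exact: hh_ge0.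
- by apply: mulr_ge0; [lra | exact: hh_ge0].
- exact: q0.
rewrite exprMn !hh_pow.
have e : (2 * k - 2 = (2 * k - 4).+2)%N by lia.
have e' : (2 * k - 1 = (2 * k - 4).+3)%N by lia.
apply: (@le_trans _ _ (m%:R * ((9 / 10) ^+ (2 * k - 1) * n%:R ^+ (2 * k - 2)))); last first.
  by rewrite mulrCA.
apply: ler_wpM2l; first exact: ler0n.
rewrite e e'.
have hn' : (n'%:R : R) <= 3 / 4 * n%:R.
  have : ((4 * n')%:R : R) <= (3 * n)%:R by rewrite ler_nat.
  rewrite !natrM; lra.
apply: (@le_trans _ _ ((3 / 4 * n%:R) ^+ (2 * k - 4).+2)).
  by apply: lerXn2r; rewrite ?nnegrE //; lra.
rewrite exprMn; apply: ler_wpM2r; first exact: exprn_ge0.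
exact: frac_pow.
Qed.

Lemma main_bound : exists K : R, forall n m,
  ((Fs pi n m)%:R : R) <= expR (K * (n%:R + hh n m)).
Proof.
pose a : R := (Amt k)%:R; pose d : R := DD%:R.
have a0 : 0 <= a by [].
have d0 : 0 <= d by [].
exists (48 * a + 36 * d + 1) => n; elim/ltn_ind: n => n IH m.
set K := 48 * a + 36 * d + 1.
have K1 : 1 <= K by rewrite /K; lra.
have [n1|n2] := leqP n 1.
  have hF : (Fs pi n m <= 2 ^ (n * n))%N.
    rewrite /Fs; apply: (@leq_trans #|powerset [set: 'I_n * 'I_n]|).
      by apply: subset_leq_card; apply/fintype.subsetP=> S _; rewrite powersetE finset.subsetT.
    by rewrite card_powerset cardsT card_prod card_ord.
  apply: (@le_trans _ _ (1 + K * (n%:R + hh n m))); last exact: expR_ge1Dx.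
  apply: (@le_trans _ _ (2 ^ (n * n))%:R); first by rewrite ler_nat.
  have hh0 := hh_ge0 n m.
  move: n1 {IH hF}; case: n hh0 => [|[|//]] hh0 _.
    have : 0 <= K * (0 + hh 0 m) by apply: mulr_ge0; lra.
    rewrite muln0 expn0; lra.
  have : 0 <= K * hh 1 m by apply: mulr_ge0; lra.
  rewrite muln1 expn1 mulrDr mulr1; lra.
set n' := (n.+1 %/ 2)%N.
have n'n : (n' < n)%N by rewrite /n'; lia.
have n34 : (4 * n' <= 3 * n)%N by rewrite /n'; lia.
have hs := hh_shrink m n34.
set h' := hh n' m; set h := hh n m.
have h'0 : 0 <= h' := hh_ge0 n' m.
set E : R := (4 * Amt k * n')%:R + d * h'.
have cr := count_rec pi n m; rewrite -/n' in cr.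
apply: (@le_trans _ _ (\sum_(S' in [set S' : {set 'I_n' * 'I_n'} | (ncop pi S' <= m)%N]) expR (4 * E))).
  have cr' : ((Fs pi n m)%:R : R) <= (\sum_(S' in [set S' : {set 'I_n' * 'I_n'} | (ncop pi S' <= m)%N])
      2 ^ (4 * #|S'|))%:R by rewrite ler_nat.
  apply: (le_trans cr'); rewrite natr_sum; apply: ler_sum => S'.
  rewrite inE => hS'; rewrite natrX; apply: (le_trans (pow2_le_expR _)); rewrite ler_expR natrM.
  by apply: ler_wpM2l => //; exact: E_bound.
rewrite sumr_const -(mulr_natl (expR (4 * E))).
apply: (@le_trans _ _ (expR (K * (n'%:R + h')) * expR (4 * E))).
  by apply: ler_wpM2r; [exact: expR_ge0 | exact: (IH n' n'n m)].
rewrite -expRD ler_expR /E natrM natrM.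
have hn : (n'%:R : R) <= 3 / 4 * n%:R.
  have : ((4 * n')%:R : R) <= (3 * n)%:R by rewrite ler_nat.
  rewrite !natrM; lra.
have n0 : (0 : R) <= n%:R by [].
have h0 : 0 <= h := hh_ge0 n m.
rewrite -/a.
have K0 : 0 <= K by lra.
have t1 : (K + 16 * a) * n'%:R <= (K + 16 * a) * (3 / 4 * n%:R) by apply: ler_wpM2l => //; lra.
have t2 : (K + 4 * d) * h' <= (K + 4 * d) * (9 / 10 * h) by apply: ler_wpM2l => //; lra.
have p1 : 0 <= a * n%:R by apply: mulr_ge0.
have p2 : 0 <= d * n%:R by apply: mulr_ge0.
have p3 : 0 <= a * h by apply: mulr_ge0.
have p4 : 0 <= d * h by apply: mulr_ge0.
rewrite /K in t1 t2 *; lra.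
Qed.

End Main.
End Real.

Lemma copies_ncop k (pi : 'S_k) n (M : 'M[bool]_n) :
  copies pi M = ncop pi [set p : 'I_n * 'I_n | M p.1 p.2].
Proof.
rewrite /copies /ncop; apply: eq_card => xy; rewrite !inE /is_copy /copyS.
congr [&& _, _ & _]; apply: eq_forallb => i; by rewrite inE.
Qed.

Theorem proposition4p3 (R : realType) (k : nat) (hk : (1 < k)%N) (pi : 'S_k) :
  exists C : R, forall m n : nat,
    (#|[set M : 'M[bool]_n | (copies pi M <= m)%N]|%:R : R) <=
    expR (C * (n%:R + powR (m%:R * n%:R ^+ (2 * k - 2)) ((2 * k - 1)%:R)^-1)).
Proof.
have [K HK] := @main_bound R k pi hk.
exists K => m n.
apply: le_trans (HK n m).
rewrite ler_nat /Fs.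
pose supp (M : 'M[bool]_n) := [set p : 'I_n * 'I_n | M p.1 p.2].
rewrite -(@card_in_imset _ _ supp); last first.
  move=> M1 M2 _ _ e; apply/matrixP => i j.
  by have := congr1 (fun S : {set 'I_n * 'I_n} => (i, j) \in S) e; rewrite !inE.
apply: subset_leq_card; apply/fintype.subsetP => S /imsetP [M]; rewrite !inE => hM ->.
by rewrite -copies_ncop.
Qed.
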